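(* Let $p>1$ and $0<a<1$. Let $r$ be a number with $0<a<a+r<1$ and set $c=b_{\mathbb{D},p}(a,a+r)$. Then \[ \{z:|z-a|<r\}\subset B_{\mathbb{D},p}(a;c). \]
   Context: $\mathbb{D}=\{z\in\mathbb{C}:|z|<1\}$. For $z_1,z_2\in\mathbb{D}$ and $p\ge1$, $b_{\mathbb{D},p}(z_1,z_2)=\sup_{z\in\partial\mathbb{D}}\frac{|z_1-z_2|}{\sqrt[p]{|z_1-z|^p+|z-z_2|^p}}$, and $B_{\mathbb{D},p}(a;c)=\{z\in\mathbb{D}: b_{\mathbb{D},p}(a,z)<c\}$. *)

(* Defs.v *)
From Stdlib Require Import Reals.
From Coquelicot Require Import Coquelicot.
Open Scope R_scope.

Definition in_disk (z : C) : Prop := Cmod z < 1.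
Definition on_circle (z : C) : Prop := Cmod z = 1.

Definition b_quot (p : R) (z1 z2 z : C) : R :=
  Cmod (z1 - z2) /
  Rpower (Rpower (Cmod (z1 - z)) p + Rpower (Cmod (z - z2)) p) (/ p).

(* b_{D,p}(z1,z2) = sup over z in the unit circle (as an extended real,
   Coquelicot's least upper bound; it is finite since the quotient is <= 2^(1-1/p)... bounded) *)
Definition b_Dp (p : R) (z1 z2 : C) : R :=
  real (Lub_Rbar (fun t => exists z, on_circle z /\ t = b_quot p z1 z2 z)).

Definition B_Dp (p : R) (a : C) (c : R) (z : C) : Prop :=
  in_disk z /\ b_Dp p a z < c.

(* Main.v *)
Require Import Defs.
From Stdlib Require Import Reals Lra.
From Coquelicot Require Import Coquelicot.
Open Scope R_scope.

Lemma lub_facts (E : R -> Prop) (M x : R) :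
  (forall y, E y -> y <= M) -> E x -> x <= real (Lub_Rbar E) <= M.
Proof.
  intros HM Ex.
  destruct (Lub_Rbar_correct E) as [Hub Hl].
  assert (H1 : Rbar_le (Lub_Rbar E) M) by (apply Hl; intros y Ey; apply HM; auto).
  assert (H2 : Rbar_le x (Lub_Rbar E)) by (apply Hub; auto).
  destruct (Lub_Rbar E) as [l| |]; simpl in *; try tauto.
Qed.

Lemma Cmod_sub_ge (u v : C) : Cmod u - Cmod v <= Cmod (u - v).
Proof.
  assert (H := Cmod_triangle (u - v) v).
  replace (u - v + v)%C with u in H by ring. lra.
Qed.

Lemma Cmod_sub_sym (u v : C) : Cmod (u - v) = Cmod (v - u).
Proof.
  replace (u - v)%C with (- (v - u))%C by ring.
  apply Cmod_opp.
Qed.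

Lemma Rpower_pos x y : 0 < Rpower x y.
Proof. unfold Rpower; apply exp_pos. Qed.

Lemma bound_quot (p a : R) (z w : C) :
  1 < p -> 0 < a -> a < 1 -> Cmod z < 1 -> on_circle w ->
  b_quot p (RtoC a) z w <=
  Cmod (RtoC a - z) / Rpower (Rpower (1 - a) p + Rpower (1 - Cmod z) p) (/ p).
Proof.
  intros Hp Ha Ha1 Hz Hw. unfold b_quot, on_circle in *.
  assert (Haw : 1 - a <= Cmod (RtoC a - w)).
  { rewrite Cmod_sub_sym. assert (H := Cmod_sub_ge w (RtoC a)).
    rewrite Cmod_R, Rabs_pos_eq in H; lra. }
  assert (Hwz : 1 - Cmod z <= Cmod (w - z)).
  { assert (H := Cmod_sub_ge w z). lra. }
  unfold Rdiv. apply Rmult_le_compat_l. apply Cmod_ge_0.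
  apply Rinv_le_contravar. apply Rpower_pos.
  apply Rle_Rpower_l. left; apply Rinv_0_lt_compat; lra.
  split. apply Rplus_lt_0_compat; apply Rpower_pos.
  apply Rplus_le_compat; apply Rle_Rpower_l; lra.
Qed.

Theorem theorem3p19 (p a r : R) :
  1 < p -> 0 < a -> a < 1 -> 0 < r -> a + r < 1 ->
  forall z : C, Cmod (z - RtoC a) < r ->
    B_Dp p (RtoC a) (b_Dp p (RtoC a) (RtoC (a + r))) z.
Proof.
  intros Hp Ha Ha1 Hr Har z Hz.
  set (s := Cmod (z - RtoC a)).
  assert (Hs0 : 0 <= s) by apply Cmod_ge_0.
  assert (Hzs : Cmod z <= a + s).
  { assert (H := Cmod_sub_ge z (RtoC a)). rewrite Cmod_R, Rabs_pos_eq in H by lra. unfold s. apply Rle_trans with (a + (Cmod z - a)); [lra| apply Rplus_le_compat_l; exact H]. }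
  assert (Hsr : s < r) by exact Hz.
  assert (Hzd : Cmod z < 1) by lra.
  split. exact Hzd.
  set (D := fun t => Rpower (Rpower (1 - a) p + Rpower (1 - t) p) (/ p)).
  assert (Dpos : forall t, 0 < D t) by (intro; apply Rpower_pos).
  assert (Hb1 : b_Dp p (RtoC a) z <= s / D (Cmod z)).
  { unfold b_Dp.
    destruct (lub_facts (fun t => exists w, on_circle w /\ t = b_quot p (RtoC a) z w)
               (s / D (Cmod z)) (b_quot p (RtoC a) z (RtoC 1))) as [_ H]; auto.
    - intros y [w [Hw ->]]. unfold D, s. rewrite Cmod_sub_sym.
      apply bound_quot; auto.
    - exists (RtoC 1). split; auto. unfold on_circle. apply Cmod_1. }
  assert (HDle : D (a + r) <= D (Cmod z)).
  { unfold D. apply Rle_Rpower_l. left; apply Rinv_0_lt_compat; lra.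
    split. apply Rplus_lt_0_compat; apply Rpower_pos.
    apply Rplus_le_compat_l. apply Rle_Rpower_l; lra. }
  assert (Hc : r / D (a + r) <= b_Dp p (RtoC a) (RtoC (a + r))).
  { unfold b_Dp.
    assert (Hq : b_quot p (RtoC a) (RtoC (a + r)) (RtoC 1) = r / D (a + r)).
    { unfold b_quot, D.
      replace (RtoC a - RtoC (a + r))%C with (RtoC (- r)) by (unfold RtoC, Cminus, Cplus, Copp; simpl; f_equal; ring).
      replace (RtoC a - RtoC 1)%C with (RtoC (a - 1)) by (unfold RtoC, Cminus, Cplus, Copp; simpl; f_equal; ring).
      replace (RtoC 1 - RtoC (a + r))%C with (RtoC (1 - (a + r))) by (unfold RtoC, Cminus, Cplus, Copp; simpl; f_equal; ring).
      rewrite !Cmod_R. rewrite Rabs_Ropp, (Rabs_pos_eq r) by lra.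
      rewrite Rabs_left by lra. rewrite (Rabs_pos_eq (1 - (a+r))) by lra.
      replace (- (a - 1)) with (1 - a) by ring. reflexivity. }
    rewrite <- Hq.
    assert (Hza : Cmod (RtoC (a + r)) < 1) by (rewrite Cmod_R, Rabs_pos_eq; lra).
    destruct (lub_facts (fun t => exists w, on_circle w /\ t = b_quot p (RtoC a) (RtoC (a + r)) w)
               (Cmod (RtoC a - RtoC (a + r)) / D (Cmod (RtoC (a + r))))
               (b_quot p (RtoC a) (RtoC (a + r)) (RtoC 1))) as [H _]; auto.
    - intros y [w [Hw ->]]. unfold D. apply bound_quot; auto.
    - exists (RtoC 1). split; auto. unfold on_circle. apply Cmod_1. }
  apply Rle_lt_trans with (1 := Hb1). apply Rlt_le_trans with (2 := Hc).
  apply Rle_lt_trans with (s / D (a + r)).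
  - unfold Rdiv. apply Rmult_le_compat_l; auto. apply Rinv_le_contravar; auto.
  - unfold Rdiv. apply Rmult_lt_compat_r. apply Rinv_0_lt_compat; auto. lra.
Qed.
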